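(* Fix a positive integer $q$ and $\epsilon\in(0,1)$. Let $P_n$ be a random many-to-one school choice problem with $n$ schools of quota $q$ and $nq$ students, and let $I_0\subseteq I$, $S_1\subseteq S$ be fixed subsets with $|I_0|\ge\epsilon nq$ and $|S_1|\ge\epsilon n$. The probability of the event that the students in $I_0$ together make at least $n\sqrt{\log n}$ applications during DA and no student in $I_0$ ever applies to a school in $S_1$ is at most $(1-\epsilon)^{n\sqrt{\log n}}$.
   Context: A random many-to-one school choice problem $P_n$ with quota $q$: a set $S$ of $n$ schools, each with quota $q$, and a set $I$ of $nq$ students; each student's strict preference over $S$ and each school's strict priority over $I$ are uniformly random linear orders, all mutually independent. Student-proposing deferred acceptance (DA): in each round every student not tentatively held applies to her most preferred school that has not yet rejected her; each school tentatively holds its $q$ highest-priority applicants and rejects the rest; stop when a round has no new rejection. Student $i$ applies to school $s$ if at some round she proposes to $s$; the number of applications a student makes is the number of schools she applies to. *)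

(* Defs.v *)
From HB Require Import structures.
From mathcomp Require Import all_boot all_order all_algebra all_fingroup.
From mathcomp Require Import all_classical all_reals all_analysis.
Set Implicit Arguments. Unset Strict Implicit. Unset Printing Implicit Defensive.
Import Order.TTheory GRing.Theory Num.Theory.

(* Students are 'I_(n*q), schools are 'I_n.
   A profile P = (pref, prio):
   - pref i : {perm 'I_n}, pref i s = rank of school s in student i's
     preference (0 = most preferred);  a strict linear order on schools.
   - prio s : {perm 'I_(n*q)}, prio s j = rank of student j in school s's
     priority (0 = highest priority); a strict linear order on students.
   The uniform distribution on profiles is the uniform distribution on this
   finite type (all orders uniform and mutually independent). *)
Definition profile (n q : nat) : finType :=
  ({ffun 'I_(n * q) -> {perm 'I_n}} * {ffun 'I_n -> {perm 'I_(n * q)}})%type.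

(* DA state: r j = number of schools that have rejected student j so far.
   Student j currently applies to (or is held by) the school s with
   pref j s = r j (if r j < n). *)
Definition da_rejected (n q : nat) (P : profile n q)
    (r : {ffun 'I_(n * q) -> nat}) (j : 'I_(n * q)) : bool :=
  [exists s : 'I_n,
     ((P.1 j s : nat) == r j) &&
     (q <= #|[set j' : 'I_(n * q) |
               ((P.1 j' s : nat) == r j') && (P.2 s j' < P.2 s j)%N]|)].

(* One round: each school holds its q highest-priority current applicants
   and rejects the others. *)
Definition da_step (n q : nat) (P : profile n q)
    (r : {ffun 'I_(n * q) -> nat}) : {ffun 'I_(n * q) -> nat} :=
  [ffun j => if da_rejected P r j then (r j).+1 else r j].

(* Final rejection counts.  Every round with a new rejection increases
   sum_j r j, and r j <= n, so after n*(n*q)+1 rounds the state is a fixed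
   point, i.e. the algorithm has stopped. *)
Definition da_rejections (n q : nat) (P : profile n q) : {ffun 'I_(n * q) -> nat} :=
  iter (n * (n * q)).+1 (da_step P) [ffun _ => 0%N].

Definition da_applies (n q : nat) (P : profile n q) (i : 'I_(n * q)) (s : 'I_n) : bool :=
  (P.1 i s <= da_rejections P i)%N.

Definition da_num_applications (n q : nat) (P : profile n q) (i : 'I_(n * q)) : nat :=
  #|[set s : 'I_n | da_applies P i s]|.

Definition prob (R : realType) (n q : nat) (E : pred (profile n q)) : R :=
  (#|[set P : profile n q | E P]|%:R / #|[set: profile n q]|%:R)%R.

(* Main.v *)
Require Import Defs.
From HB Require Import structures.
From mathcomp Require Import all_boot all_order all_algebra all_fingroup.
From mathcomp Require Import all_classical all_reals all_analysis.
From mathcomp Require Import zify.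
Import Order.TTheory GRing.Theory Num.Theory.
Set Implicit Arguments. Unset Strict Implicit. Unset Printing Implicit Defensive.

Section Agree.
Variables (n q : nat).
Local Notation N := (n * q).
Local Notation prof := (profile n q).

Definition agree (a : {ffun 'I_N -> nat}) (P P' : prof) : Prop :=
  P.2 = P'.2 /\ forall j s, ((P.1 j s < a j) || (P'.1 j s < a j))%N ->
     P.1 j s = P'.1 j s.

Lemma agree_mono (a b : {ffun 'I_N -> nat}) (P P' : prof) :
  (forall j, a j <= b j)%N -> agree b P P' -> agree a P P'.
Proof.
move=> hab [h1 h2]; split=> // j s hs; apply: h2.
by case/orP: hs => h; apply/orP; [left|right]; exact: leq_trans h (hab j).
Qed.

Definition succ_st (r : {ffun 'I_N -> nat}) : {ffun 'I_N -> nat} :=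
  [ffun j => (r j).+1].

Definition Rt t (P : prof) := iter t (da_step P) [ffun _ => 0%N].

Lemma agree_eqrank r P P' j s : agree (succ_st r) P P' ->
  ((P.1 j s : nat) == r j) = ((P'.1 j s : nat) == r j).
Proof.
case=> _ h; apply/eqP/eqP => e.
  by rewrite -(h j s) // ffunE e ltnSn.
by rewrite (h j s) // ffunE e ltnSn orbT.
Qed.

Lemma rej_inv r P P' j : agree (succ_st r) P P' ->
  da_rejected P r j = da_rejected P' r j.
Proof.
move=> hA; have [e2 _] := hA.
rewrite /da_rejected; apply: eq_existsb => s.
rewrite (agree_eqrank j s hA) e2.
congr (_ && (_ <= _)%N); apply: eq_card => j'.
by rewrite !inE (agree_eqrank j' s hA).
Qed.

Lemma step_ge (r : {ffun 'I_N -> nat}) (P : prof) (j : 'I_N) : (r j <= da_step P r j)%N.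
Proof. by rewrite ffunE; case: ifP. Qed.

Lemma det t (P P' : prof) : agree (succ_st (Rt t P)) P P' -> Rt t P' = Rt t P.
Proof.
elim: t => [//|t IH] hA.
have hA' : agree (succ_st (Rt t P)) P P'.
  apply: agree_mono hA => j; rewrite !ffunE ltnS; case: ifP => _ //; exact: leqnSn.
rewrite /Rt !iterS -/(Rt t P) -/(Rt t P') IH //.
by apply/ffunP => j; rewrite !ffunE (rej_inv j hA').
Qed.

End Agree.

Section Pot.
Variables (R : realType) (n q : nat).
Local Notation N := (n * q).
Local Notation prof := (profile n q).
Variables (I0 : {set 'I_N}) (S1 : {set 'I_n}) (M : nat) (p : R).

Definition avoid (P : prof) (a : {ffun 'I_N -> nat}) : bool :=
  [forall i in I0, forall s in S1, (a i <= P.1 i s)%N].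
Definition cnt (a : {ffun 'I_N -> nat}) := (\sum_(i in I0) a i)%N.
Definition Z (P : prof) (a : {ffun 'I_N -> nat}) : R :=
  (avoid P a)%:R * p ^+ (M - cnt a).

Lemma avoid_agree a (P P' : prof) : agree a P P' -> avoid P a = avoid P' a.
Proof.
case=> _ h; rewrite /avoid; apply: eq_forallb => i; congr (_ ==> _).
apply: eq_forallb => s; congr (_ ==> _).
case: (leqP (a i) (P.1 i s)) => h1; case: (leqP (a i) (P'.1 i s)) => h2 //.
  have e : P.1 i s = P'.1 i s by apply: h; rewrite h2 orbT.
  by rewrite e leqNgt h2 in h1.
have e : P.1 i s = P'.1 i s by apply: h; rewrite h1.
by rewrite -e leqNgt h1 in h2.
Qed.


Local Open Scope ring_scope.

Lemma sum_subset (I : finType) (X Y : {pred I}) (F : I -> R) :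
  {subset X <= Y} -> (forall i, 0 <= F i) ->
  \sum_(i in X) F i <= \sum_(i in Y) F i.
Proof.
move=> hXY hF; rewrite [X in X <= _]big_mkcond [X in _ <= X]big_mkcond.
apply: ler_sum => i _; case: ifP => hi; first by rewrite hXY.
by case: ifP.
Qed.

Section GSLin.
Variables (x0 : 'I_n) (k : 'I_N) (A : prof -> {ffun 'I_N -> nat}) (C : prof -> bool).
Hypothesis hinv : forall P P', agree (A P) P P' -> A P' = A P /\ C P' = C P.
Hypothesis hk : k \in I0.

Definition Nx (P : prof) : 'I_n := (P.1 k)^-1%g (insubd x0 (A P k)).
Definition Phi (P : prof) (y : 'I_n) : prof :=
  ([ffun j => if j == k then (tperm (Nx P) y * P.1 k)%g else P.1 j], P.2).
Definition B := [set P : prof | C P && avoid P (A P)].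

Lemma B_le P y : P \in B -> y \in S1 -> (A P k <= P.1 k y)%N.
Proof.
rewrite inE => /andP[_ /forallP/(_ k)]; rewrite hk /= => /forallP/(_ y) h hy.
by move: h; rewrite hy.
Qed.

Lemma B_lt P y : P \in B -> y \in S1 -> (A P k < n)%N.
Proof. by move=> hP hy; exact: leq_ltn_trans (B_le hP hy) (ltn_ord _). Qed.

Lemma Nx_rank P y : P \in B -> y \in S1 ->
  P.1 k (Nx P) = insubd x0 (A P k) /\ (insubd x0 (A P k) : nat) = A P k.
Proof.
move=> hP hy; split; first by rewrite /Nx permKV.
by rewrite val_insubd (B_lt hP hy).
Qed.

Lemma Phi_agree P y : P \in B -> y \in S1 -> agree (A P) P (Phi P y).
Proof.
move=> hP hy; have [e1 e2] := Nx_rank hP hy; have hle := B_le hP hy.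
split=> // j s; rewrite ffunE; case: eqP => [->|_] //.
rewrite permM.
case: (eqVneq s (Nx P)) => [->|hsN].
  by rewrite tpermL e1 e2 ltnn /= ltnNge hle.
case: (eqVneq s y) => [->|hsy].
  by rewrite tpermR e1 e2 ltnn orbF ltnNge hle.
by rewrite tpermD 1?eq_sym.
Qed.

Lemma Phi_B P y : P \in B -> y \in S1 -> Phi P y \in B /\ A (Phi P y) = A P.
Proof.
move=> hP hy; have hag := Phi_agree hP hy.
have [eA eC] := hinv hag; split=> //.
by move: hP; rewrite !inE eA eC -(avoid_agree hag).
Qed.

Lemma Nx_Phi P y : P \in B -> y \in S1 -> Nx (Phi P y) = y.
Proof.
move=> hP hy; have [_ eA] := Phi_B hP hy.
rewrite {1}/Nx eA /= ffunE eqxx.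
apply: (@perm_inj _ (tperm (Nx P) y * P.1 k)%g).
by rewrite permKV permM tpermR /Nx permKV.
Qed.

Section DC.
Variables (f : {ffun 'I_N -> nat} -> R) (hf0 : forall a, 0 <= f a).

Lemma dcount : #|S1|%:R * \sum_(P in B) f (A P) <=
   n%:R * \sum_(P in B | Nx P \in S1) f (A P).
Proof.
have -> : #|S1|%:R * \sum_(P in B) f (A P) = \sum_(P in B) \sum_(y in S1) f (A P).
  by rewrite mulr_sumr; apply: eq_bigr => P _; rewrite sumr_const mulr_natl.
rewrite pair_big_dep /=.
set D := [set u : prof * 'I_n | (u.1 \in B) && (u.2 \in S1)].
have inD u : (u \in D) = (u.1 \in B) && (u.2 \in S1) by rewrite /D inE.
have -> : \sum_(u | (u.1 \in B) && (u.2 \in S1)) f (A u.1) =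
          \sum_(u in D) f (A (Phi u.1 u.2)).
  apply: eq_big => [u|u]; first by rewrite inD.
  by move=> /andP[h1 h2]; rewrite (proj2 (Phi_B h1 h2)).
set g := fun u : prof * 'I_n => (Phi u.1 u.2, Nx u.1).
have -> : \sum_(u in D) f (A (Phi u.1 u.2)) = \sum_(v in g @: D) f (A v.1).
  rewrite big_imset //=.
  move=> [P1 y1] [P2 y2]; rewrite !inD /= => /andP[h1 h1'] /andP[h2 h2'].
  move=> e; have eP : Phi P1 y1 = Phi P2 y2 := congr1 fst e.
  have eN : Nx P1 = Nx P2 := congr1 snd e.
  have ey : y1 = y2 by rewrite -(Nx_Phi h1 h1') eP (Nx_Phi h2 h2').
  subst y2; clear e; move: eP eN h1 h2 h1' h2'.
  case: P1 => f1 g1; case: P2 => f2 g2; rewrite /Phi /= => -[ef eg] eN _ _ _ _.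
  subst g2; suff -> : f1 = f2 by [].
  apply/ffunP => j; move/ffunP: ef => /(_ j).
  by rewrite !ffunE; case: eqP => [->|//]; rewrite eN => /mulgI.
apply: (@le_trans _ _ (\sum_(v in [set v : prof * 'I_n | (v.1 \in B) && (Nx v.1 \in S1)]) f (A v.1))).
  apply: sum_subset => // v /imsetP[u hu ->]; move: hu; rewrite inD /= => /andP[h1 h2].
  rewrite inE /=.
  by rewrite (Nx_Phi h1 h2) h2 andbT (proj1 (Phi_B h1 h2)).
rewrite mulr_sumr.
have -> : \sum_(P in B | Nx P \in S1) n%:R * f (A P) =
          \sum_(P in B | Nx P \in S1) \sum_(x : 'I_n) f (A P).
  by apply: eq_bigr => P _; rewrite sumr_const card_ord mulr_natl.
rewrite pair_big_dep /= le_eqVlt; apply/orP; left; apply/eqP; apply: eq_bigl => v; rewrite [in LHS]inE andbT.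
done.
Qed.
End DC.

Lemma GSL_in (A' : prof -> {ffun 'I_N -> nat})
  (hA' : forall P j, A' P j = (A P j + ((j == k) && C P))%N)
  (hp0 : 0 <= p) (hp1 : p <= 1) (hn : 0 < n%:R :> R)
  (hpS : p * n%:R = n%:R - #|S1|%:R) :
  \sum_(P : prof) Z P (A' P) <= \sum_(P : prof) Z P (A P).
Proof.
set W := fun P : prof => p ^+ (M - (cnt (A P)).+1).
have hW0 P : 0 <= W P by rewrite exprn_ge0.
rewrite (bigID C) [X in _ <= X](bigID C) /=.
apply: lerD; last first.
  apply: ler_sum => P hC.
  have -> : A' P = A P by apply/ffunP=> j; rewrite hA' (negbTE hC) andbF addn0.
  done.
apply: (@le_trans _ _ (\sum_(P : prof) ((P \in B) && (Nx P \notin S1))%:R * W P)).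
  rewrite [X in _ <= X](bigID C) /= -[X in X <= _]addr0; apply: lerD; last first.
    by apply: sumr_ge0 => P _; rewrite mulr_ge0 ?ler0n ?exprn_ge0.
  apply: ler_sum => P hC.
  have ecnt : cnt (A' P) = (cnt (A P)).+1.
    rewrite /cnt (bigD1 k hk) [in RHS](bigD1 k hk) /= hA' eqxx hC /= addn1 addSn.
    congr (_ + _).+1; apply: eq_bigr => i /andP[_ hik].
    by rewrite hA' (negbTE hik) addn0.
  rewrite /Z ecnt /W.
  case: (boolP (avoid P (A' P))) => hav; last by rewrite mul0r mulr_ge0 ?ler0n ?exprn_ge0.
  have hB : P \in B.
    rewrite inE hC /=; apply/forallP => i; apply/implyP => hi.
    apply/forallP => s; apply/implyP => hs.
    move/forallP: hav => /(_ i); rewrite hi => /forallP/(_ s); rewrite hs.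
    by apply: leq_trans; rewrite hA' leq_addr.
  have hN : Nx P \notin S1.
    apply/negP => hNs; have [e1 e2] := Nx_rank hB hNs.
    move/forallP: hav => /(_ k); rewrite hk => /forallP/(_ (Nx P)).
    by rewrite hNs /= e1 e2 hA' eqxx hC /= addn1 ltnn.
  by rewrite hB hN /= !mul1r.
apply: (@le_trans _ _ (\sum_(P : prof) p * ((P \in B)%:R * W P))); last first.
  rewrite (bigID C) /= [X in _ + X]big1 ?addr0; last first.
    by move=> P hC; rewrite inE (negbTE hC) mul0r mulr0.
  apply: ler_sum => P hC.
  case: (boolP (P \in B)) => hB; last by rewrite mul0r mulr0 /Z mulr_ge0 ?ler0n ?exprn_ge0.
  have hav : avoid P (A P) by move: hB; rewrite inE => /andP[].
  rewrite /Z hav /W !mul1r; case: (leqP M (cnt (A P))) => hc.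
    have -> : (M - (cnt (A P)).+1 = 0)%N by lia.
    have -> : (M - cnt (A P) = 0)%N by lia.
    by rewrite !expr0 mulr1.
  have -> : (M - cnt (A P) = (M - (cnt (A P)).+1).+1)%N by lia.
  by rewrite exprS.
have hd := dcount (f := fun a => p ^+ (M - (cnt a).+1)) (fun a => exprn_ge0 _ hp0).
set T := \sum_(P : prof) (P \in B)%:R * W P.
set U := \sum_(P : prof) ((P \in B) && (Nx P \in S1))%:R * W P.
have eT : \sum_(P in B) p ^+ (M - (cnt (A P)).+1) = T.
  by rewrite big_mkcond; apply: eq_bigr => P _; case: (P \in B); rewrite ?mul1r ?mul0r.
have eU : \sum_(P in B | Nx P \in S1) p ^+ (M - (cnt (A P)).+1) = U.
  by rewrite big_mkcond; apply: eq_bigr => P _; case: (_ && _); rewrite ?mul1r ?mul0r.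
rewrite eT eU in hd.
have -> : \sum_(P : prof) ((P \in B) && (Nx P \notin S1))%:R * W P = T - U.
  rewrite /T /U -sumrB; apply: eq_bigr => P _.
  by case: (P \in B); case: (Nx P \in S1); rewrite /= ?mul1r ?mul0r ?subr0 ?subrr.
rewrite -mulr_sumr -/T -(ler_pM2l hn) mulrA [n%:R * p]mulrC hpS.
by rewrite mulrBr mulrBl; apply: lerB.
Qed.

End GSLin.

Lemma GSL (x0 : 'I_n) (k : 'I_N) (A A' : prof -> {ffun 'I_N -> nat}) (C : prof -> bool)
  (hinv : forall P P', agree (A P) P P' -> A P' = A P /\ C P' = C P)
  (hA' : forall P j, A' P j = (A P j + ((j == k) && C P))%N)
  (hp0 : 0 <= p) (hp1 : p <= 1) (hn : 0 < n%:R :> R)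
  (hpS : p * n%:R = n%:R - #|S1|%:R) :
  \sum_(P : prof) Z P (A' P) <= \sum_(P : prof) Z P (A P).
Proof.
case: (boolP (k \in I0)) => hk; first exact: (GSL_in x0 hinv hk hA').
apply: ler_sum => P _.
have eA i : i \in I0 -> A' P i = A P i.
  move=> hi; rewrite hA'; case: eqP => [ei|_]; last by rewrite addn0.
  by move: hk; rewrite -ei hi.
have e1 : avoid P (A' P) = avoid P (A P).
  rewrite /avoid; apply: eq_forallb => i; case hi: (i \in I0) => //=.
  by rewrite eA.
have e2 : cnt (A' P) = cnt (A P) by apply: eq_bigr => i hi; rewrite eA.
by rewrite /Z e1 e2.
Qed.


End Pot.

Section Chain.
Variables (R : realType) (n q : nat).
Local Notation N := (n * q).
Local Notation prof := (profile n q).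
Variables (I0 : {set 'I_N}) (S1 : {set 'I_n}) (M : nat) (p : R).
Variables (x0 : 'I_n) (hp0 : (0 <= p)%R) (hp1 : (p <= 1)%R) (hn : ((0:R) < n%:R)%R)
  (hpS : (p * n%:R = n%:R - #|S1|%:R)%R).
Local Open Scope ring_scope.

Local Notation SZ a := (\sum_(P : prof) Z I0 S1 M p P (a P)).

Lemma chain (F : nat -> R) K : (forall k, (k < K)%N -> F k.+1 <= F k) -> F K <= F 0%N.
Proof.
elim: K => [//|K IH] h; apply: le_trans (h K (ltnSn K)) _.
by apply: IH => k hk; apply: h; rewrite ltnS ltnW.
Qed.

Definition St0 (k : nat) (P : prof) : {ffun 'I_N -> nat} := [ffun j : 'I_N => nat_of_bool (j < k)%N].
Definition Str t (k : nat) (P : prof) : {ffun 'I_N -> nat} :=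
  [ffun j : 'I_N => ((Rt t P j).+1 + ((j < k)%N && da_rejected P (Rt t P) j))%N].

Lemma ord_eq (j : 'I_N) k (hk : (k < N)%N) : (j == Ordinal hk) = ((j : nat) == k).
Proof. by []. Qed.

Lemma phase0 : SZ (St0 N) <= SZ (St0 0%N).
Proof.
apply: (@chain (fun k => SZ (St0 k))) => k hk.
apply: (@GSL R n q I0 S1 M p x0 (Ordinal hk) _ _ (fun _ => true)) => //.
move=> P j; rewrite !ffunE ord_eq andbT.
case: (ltngtP j k) => h //=.
- by rewrite ltnS (ltnW h).
- by rewrite ltnS leqNgt h.
- by rewrite h ltnSn.
Qed.

Lemma round t : SZ (Str t N) <= SZ (Str t 0%N).
Proof.
apply: (@chain (fun k => SZ (Str t k))) => k hk.
apply: (@GSL R n q I0 S1 M p x0 (Ordinal hk) _ _ (fun P => da_rejected P (Rt t P) (Ordinal hk))) => //.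
  move=> P P' hA.
  have hA' : agree (succ_st (Rt t P)) P P'.
    by apply: agree_mono hA => j; rewrite !ffunE leq_addr.
  have eR := det hA'.
  have er j : da_rejected P' (Rt t P) j = da_rejected P (Rt t P) j by rewrite (rej_inv j hA').
  split; last by rewrite eR er.
  by apply/ffunP => j; rewrite !ffunE eR er.
move=> P j; rewrite !ffunE ord_eq.
case: (ltngtP j k) => h //=.
- by rewrite ltnS (ltnW h) addn0.
- by rewrite ltnS leqNgt h /= !addn0.
- have -> : Ordinal hk = j by apply: val_inj.
  by rewrite h ltnSn /= addn0.
Qed.

Lemma RtS t (P : prof) : Rt t.+1 P = da_step P (Rt t P).
Proof. by []. Qed.

Lemma rounds T : SZ (fun P => succ_st (Rt T P)) <= SZ (St0 0%N).
Proof.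
have e0 P : St0 N P = Str 0 0 P.
  by apply/ffunP => j; rewrite !ffunE ltn_ord /= /Rt /= ?ffunE.
have eS t P : Str t N P = Str t.+1 0 P.
  apply/ffunP => j; rewrite /Str RtS !ffunE ltn_ord /=.
  by case: da_rejected; rewrite /= ?addn1 ?addn0.
have eT P : Str T 0 P = succ_st (Rt T P) by apply/ffunP => j; rewrite !ffunE addn0.
rewrite -(eq_bigr _ (fun P _ => congr1 _ (eT P))).
elim: T {eT} => [|T IH].
  by rewrite -(eq_bigr _ (fun P _ => congr1 _ (e0 P))); exact: phase0.
rewrite -(eq_bigr _ (fun P _ => congr1 _ (eS T P))).
exact: le_trans (round T) IH.
Qed.

End Chain.

Unset Implicit Arguments.
Local Open Scope ring_scope.

Lemma num_le (n q : nat) (P : profile n q) (i : 'I_(n * q)) :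
  (da_num_applications P i <= (da_rejections P i).+1)%N.
Proof.
rewrite /da_num_applications.
have -> : [set s | da_applies P i s] =
   (P.1 i) @^-1: [set o : 'I_n | (o <= da_rejections P i)%N].
  by apply/setP => s; rewrite !inE.
rewrite card_preimset; last exact: perm_inj.
rewrite cardE -(size_map val) -(size_iota 0 (da_rejections P i).+1).
apply: uniq_leq_size.
  by rewrite (map_inj_uniq val_inj) enum_uniq.
move=> v /mapP[w hw ->]; rewrite mem_enum inE in hw.
by rewrite mem_iota /= add0n ltnS.
Qed.

Theorem mainTheorem13 (R : realType) (q : nat) (eps : R)
  (hq : (0 < q)%N) (heps0 : 0 < eps) (heps1 : eps < 1)
  (n : nat) (I0 : {set 'I_(n * q)}) (S1 : {set 'I_n})
  (hI0 : eps * (n * q)%:R <= #|I0|%:R)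
  (hS1 : eps * n%:R <= #|S1|%:R) :
  prob R (fun P : profile n q =>
      (n%:R * Num.sqrt (ln (n%:R : R)) <= (\sum_(i in I0) da_num_applications P i)%:R)
      && [forall i in I0, forall s in S1, ~~ da_applies P i s])
  <= (1 - eps) `^ (n%:R * Num.sqrt (ln (n%:R : R))).
Proof.
set x := n%:R * Num.sqrt (ln (n%:R : R)).
rewrite /prob.
set E := [set P : profile n q | _].
have hO : (0 < #|[set: profile n q]|)%N.
  by apply/card_gt0P; exists ([ffun => 1%g], [ffun => 1%g]); rewrite inE.
rewrite ler_pdivrMr ?ltr0n //.
case: (posnP n) => hn0.
  have -> : x = 0 by rewrite /x hn0 mul0r.
  by rewrite powRr0 mul1r ler_nat cardsT max_card.
pose x0 : 'I_n := Ordinal hn0.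
have hnR : (0:R) < n%:R by rewrite ltr0n.
pose p : R := 1 - #|S1|%:R / n%:R.
have hsn : (#|S1| <= n)%N by have := max_card (mem S1); rewrite card_ord.
have hp0 : 0 <= p by rewrite /p subr_ge0 ler_pdivrMr // mul1r ler_nat.
have hp1 : p <= 1 by rewrite /p gerBl divr_ge0 ?ler0n.
have hpS : p * n%:R = n%:R - #|S1|%:R.
  by rewrite /p mulrBl mul1r divfK // lt0r_neq0.
have hpe : p <= 1 - eps by rewrite /p lerD2l lerN2 ler_pdivlMr.
have hx0 : 0 <= x by rewrite /x mulr_ge0 ?ler0n ?sqrtr_ge0.
pose M := `|Num.ceil x|%N.
have hM : (M : int) = Num.ceil x by rewrite /M gez0_abs // ceil_ge0 (lt_le_trans _ hx0) // ltrN10.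
have hxM : x <= M%:R.
  by apply: le_trans (ceil_ge x) _; rewrite -hM.
have hMk k : x <= k%:R -> (M <= k)%N.
  by move=> hk; rewrite -lez_nat hM ceil_le_int.
set T := (n * (n * q)).+1.
have hE P : P \in E -> 1 <= Z I0 S1 M p P (succ_st (Rt T P)).
  rewrite inE => /andP[hx hav]; rewrite /Z.
  have -> : avoid I0 S1 P (succ_st (Rt T P)) = true.
    apply/forallP => i; apply/implyP => hi; apply/forallP => s; apply/implyP => hs.
    move/forallP: hav => /(_ i); rewrite hi /= => /forallP/(_ s); rewrite hs /=.
    by move=> h; rewrite [succ_st _ _]ffunE ltnNge; exact: h.
  have -> : (M - cnt I0 (succ_st (Rt T P)) = 0)%N.
    apply/eqP; rewrite subn_eq0; apply: leq_trans (hMk _ hx) _.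
    by apply: leq_sum => i _; rewrite ffunE; exact: num_le.
  by rewrite mul1r expr0.
have key : #|E|%:R <= p ^+ M * #|[set: profile n q]|%:R.
  have -> : (#|E|%:R : R) = \sum_(P in E) 1 by rewrite sumr_const.
  apply: le_trans (ler_sum _ hE) _.
  apply: le_trans (sum_subset _ _) _.
  - exact: (fun P _ => isT : P \in predT).
  - by move=> P; rewrite /Z mulr_ge0 ?ler0n ?exprn_ge0.
  have hr := @rounds R n q I0 S1 M p x0 hp0 hp1 hnR hpS T.
  apply: le_trans hr _.
  have eZ P : Z I0 S1 M p P (St0 0 P) = p ^+ M.
    rewrite /Z.
    have -> : avoid I0 S1 P (St0 0 P) = true.
      by apply/forallP => i; apply/implyP => _; apply/forallP => s; apply/implyP => _; rewrite ffunE.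
    have -> : cnt I0 (St0 0 P) = 0%N by rewrite /cnt big1 // => i _; rewrite ffunE.
    by rewrite subn0 mul1r.
  rewrite (eq_bigr _ (fun P _ => eZ P)).
  rewrite (eq_bigl (fun P => P \in [set: profile n q])); last by move=> P; rewrite inE.
  by rewrite sumr_const mulr_natr.
apply: le_trans key _; apply: ler_wpM2r; first exact: ler0n.
have he0 : 0 <= 1 - eps by rewrite subr_ge0 ltW.
apply: (@le_trans _ _ ((1 - eps) ^+ M)).
  by rewrite lerXn2r // nnegrE.
rewrite -powR_mulrn //; apply: ger_powR => //.
by rewrite subr_gt0 heps1 /= gerBl ltW.
Qed.
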